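(* Let $f:[0,1]\to[0,1]$ be a continuous function that does not admit a splitting sequence. If $0\le d<e\le 1$ and either $d$ and $e$ are both fixed points of $f$ or $\{d,e\}$ is a 2-cycle of $f$, then there is exactly one component $C$ of $f^{-1}((d,e))$ such that $f(C)=(d,e)$.
   Context: A 2-cycle is a set $\{s,t\}$ with $s\ne t$, $f(s)=t$, $f(t)=s$. A sequence $(T_n)_{n\in\mathbb N}$ of closed intervals $T_n\subsetneq[0,1]$ (possibly degenerate) is tight if $f(T_{n+1})=T_n$ for every $n$ and $T_n$ is nondegenerate for all sufficiently large $n$. A tight sequence $(T_n)$, $T_n=[l_n,r_n]$, is a splitting sequence admitted by $f$ if there are an infinite set $N\subseteq\mathbb N$ and nondegenerate closed intervals $S_n\subseteq[0,1]$ ($n\in N$) with $S_n\cap T_n\subseteq\{l_n,r_n\}$ and $f(S_n)=f(T_n)$ for all $n\in N$. *)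

(* Defs.v *)
From HB Require Import structures.
From mathcomp Require Import all_boot all_order all_algebra.
From mathcomp Require Import all_classical all_reals all_analysis.
Set Implicit Arguments. Unset Strict Implicit. Unset Printing Implicit Defensive.
Import Order.TTheory GRing.Theory Num.Theory.
Import numFieldTopology.Exports numFieldNormedType.Exports.
Local Open Scope classical_set_scope.
Local Open Scope ring_scope.

(* A closed interval [l,r] is encoded by the pair (l, r); "closed interval
   contained in [0,1], possibly degenerate" means 0 <= l <= r <= 1. *)

Definition tight {R : realType} (f : R -> R) (T : nat -> R * R) : Prop :=
  (forall n, 0 <= (T n).1 /\ (T n).1 <= (T n).2 /\ (T n).2 <= 1 /\
             `[(T n).1, (T n).2]%classic <> `[0, 1]%classic :> set R) /\
  (forall n, f @` `[(T n.+1).1, (T n.+1).2]%classic = `[(T n).1, (T n).2]%classic) /\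
  (exists m, forall n, (m <= n)%N -> (T n).1 < (T n).2).

Definition splitting_sequence {R : realType} (f : R -> R) (T : nat -> R * R)
  : Prop :=
  tight f T /\
  exists N : set nat, ~ finite_set N /\
  exists S : nat -> R * R, forall n, N n ->
    [/\ 0 <= (S n).1, (S n).1 < (S n).2, (S n).2 <= 1,
        `[(S n).1, (S n).2]%classic `&` `[(T n).1, (T n).2]%classic `<=` [set (T n).1; (T n).2]
      & f @` `[(S n).1, (S n).2]%classic = f @` `[(T n).1, (T n).2]%classic].

Definition admits_splitting_sequence {R : realType} (f : R -> R) : Prop :=
  exists T, splitting_sequence f T.

(* Main.v *)
Require Import Defs.
From HB Require Import structures.
From mathcomp Require Import all_boot all_order all_algebra.
From mathcomp Require Import all_classical all_reals all_analysis.
From mathcomp Require Import lra.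
Import Order.TTheory GRing.Theory Num.Theory.
Import numFieldTopology.Exports numFieldNormedType.Exports.
Local Open Scope classical_set_scope.
Local Open Scope ring_scope.

Section S.
Variable R : realType.
Implicit Types (f : R -> R).

Lemma level_closed f a b r : {within `[a,b], continuous f} ->
  closed [set x | `[a,b]%classic x /\ f x = r].
Proof.
move/continuous_closedP/(_ _ (@closed_eq _ r))/closed_subspaceP => [V cV VE].
rewrite (_ : [set x | _] = V `&` `[a,b]%classic).
  by apply: closedI => //; exact: itv_closed.
rewrite VE; apply/seteqP; split => x /= []; auto.
Qed.

Lemma closed_inf_in (A : set R) : A !=set0 -> has_lbound A -> closed A -> A (inf A).
Proof.
move=> A0 hl cA; apply: (itv_closed_infimums A0 cA); split.
  exact: ge_inf.
by move=> x xl; apply: lb_le_inf.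
Qed.

Lemma closed_sup_in (A : set R) : A !=set0 -> has_ubound A -> closed A -> A (sup A).
Proof.
move=> A0 hl cA; apply: (itv_closed_supremums A0 cA); split.
  exact: sup_upper_bound.
by move=> x xl; apply: sup_le_ub.
Qed.

Lemma first_hit f a b r : {within `[a,b], continuous f} ->
  (exists2 x, `[a,b]%classic x & f x = r) ->
  exists c, [/\ a <= c, c <= b, f c = r & forall x, a <= x < c -> f x != r].
Proof.
move=> fc [x0 x0ab fx0].
set A := [set x | `[a,b]%classic x /\ f x = r].
have A0 : A !=set0 by exists x0.
have hl : has_lbound A by exists a => y [] /=; rewrite in_itv /= => /andP[].
have [] := @closed_inf_in A A0 hl (@level_closed f a b r fc).
rewrite /= in_itv /= => /andP[ac cb] fc'.
exists (inf A); split => // x /andP[ax xc]; apply/negP => /eqP fx.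
have : A x by split => //=; rewrite in_itv /= ax /= (le_trans (ltW xc) cb).
by move/(ge_inf hl); rewrite leNgt xc.
Qed.

Lemma last_hit f a b r : {within `[a,b], continuous f} ->
  (exists2 x, `[a,b]%classic x & f x = r) ->
  exists c, [/\ a <= c, c <= b, f c = r & forall x, c < x <= b -> f x != r].
Proof.
move=> fc [x0 x0ab fx0].
set A := [set x | `[a,b]%classic x /\ f x = r].
have A0 : A !=set0 by exists x0.
have hl : has_ubound A by exists b => y [] /=; rewrite in_itv /= => /andP[].
have [] := @closed_sup_in A A0 hl (@level_closed f a b r fc).
rewrite /= in_itv /= => /andP[ac cb] fc'.
exists (sup A); split => // x /andP[ax xc]; apply/negP => /eqP fx.
have : A x by split => //=; rewrite in_itv /= xc andbT (le_trans ac (ltW ax)).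
by move/(sup_upper_bound (conj A0 hl)); rewrite leNgt ax.
Qed.

Lemma itv_sub (a b c e : R) : a <= c -> e <= b -> `[c,e]%classic `<=` `[a,b]%classic.
Proof.
move=> ac eb x /=; rewrite !in_itv /= => /andP[cx xe].
by rewrite (le_trans ac cx) (le_trans xe eb).
Qed.

Lemma core_pull f p q l r : p < q -> l < r -> f p = l -> f q = r ->
  {within `[p,q], continuous f} ->
  exists a b, [/\ p <= a, a < b, b <= q, f a = l /\ f b = r &
     forall x, a < x < b -> l < f x < r].
Proof.
move=> pq lr fp fq fc.
have [a [pa aq fa ha]] : exists c, [/\ p <= c, c <= q, f c = l & forall x, c < x <= q -> f x != l].
  by apply: last_hit => //; exists p => //=; rewrite in_itv /= lexx ltW.
have aq' : a < q by rewrite lt_neqAle aq andbT; apply/negP => /eqP E; move: fq fa; rewrite E => ->; lra.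
have fc2 : {within `[a,q], continuous f} by apply: continuous_subspaceW fc; apply: itv_sub.
have [b [ab bq fb hb]] : exists c, [/\ a <= c, c <= q, f c = r & forall x, a <= x < c -> f x != r].
  by apply: first_hit => //; exists q => //=; rewrite in_itv /= lexx ltW.
have ab' : a < b by rewrite lt_neqAle ab andbT; apply/negP => /eqP E; move: fa fb; rewrite E => ->; lra.
exists a, b; split => // x /andP[ax xb].
have fxl : f x != l by apply: ha; rewrite ax (le_trans (ltW xb) bq).
have fxr : f x != r by apply: hb; rewrite (ltW ax) xb.
apply/andP; split.
  rewrite lt_neqAle eq_sym fxl /=; rewrite leNgt; apply/negP => fxl'.
  have fc3 : {within `[x,b], continuous f}.
    by apply: continuous_subspaceW fc; apply: itv_sub; [apply: le_trans (ltW ax)|].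
  have [|c] := @IVT R f x b l (ltW xb) fc3.
    by rewrite fb; apply/andP; split; [rewrite ge_min (ltW fxl') | rewrite le_max (ltW lr) orbT].
  rewrite in_itv /= => /andP[xc cb] fcl.
  by move: (ha c); rewrite fcl eqxx (lt_le_trans ax xc) (le_trans cb bq) => /(_ isT).
rewrite lt_neqAle fxr /=; rewrite leNgt; apply/negP => fxr'.
have fc3 : {within `[a,x], continuous f}.
  by apply: continuous_subspaceW fc; apply: itv_sub => //; apply: le_trans (ltW xb) bq.
have [|c] := @IVT R f a x r (ltW ax) fc3.
  by rewrite fa; apply/andP; split; [rewrite ge_min (ltW lr) | rewrite le_max (ltW fxr') orbT].
rewrite in_itv /= => /andP[ac cx] fcr.
by move: (hb c); rewrite fcr eqxx ac (le_lt_trans cx xb) => /(_ isT).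
Qed.

Lemma gen_pull f p q l r : {within `[0,1], continuous f} ->
  `[0,1]%classic p -> `[0,1]%classic q -> l < r -> f p = l -> f q = r ->
  exists a b, [/\ (p <= a /\ b <= q) \/ (q <= a /\ b <= p), a < b,
    (f a = l /\ f b = r) \/ (f a = r /\ f b = l) &
    forall x, a < x < b -> l < f x < r].
Proof.
move=> fc; rewrite /= !in_itv /= => /andP[p0 p1] /andP[q0 q1] lr fp fq.
case: (ltgtP p q) => pq.
- have fc' : {within `[p,q], continuous f} by apply: continuous_subspaceW fc; apply: itv_sub.
  have [a [b [pa ab bq [fa fb] h]]] := @core_pull f p q l r pq lr fp fq fc'.
  by exists a, b; split; auto.
- have fc' : {within `[q,p], continuous (fun x => - f x)}.
    move=> x; apply: continuousN.
    by apply: (continuous_subspaceW (@itv_sub 0 1 q p q0 p1) fc).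
  have lr' : - r < - l by lra.
  have fq' : - f q = - r by rewrite fq.
  have fp' : - f p = - l by rewrite fp.
  have [a [b [pa ab bq [fa fb] h]]] := @core_pull (fun x => - f x) q p (-r) (-l) pq lr' fq' fp' fc'.
  exists a, b; split; auto.
    by right; split; apply: oppr_inj.
  by move=> x /h /andP[h1 h2]; apply/andP; split; lra.
- by move: fq fp lr; rewrite pq => -> ->; lra.
Qed.

Lemma image_eq f a b l r : {within `[a,b], continuous f} -> a < b -> l < r ->
  (f a = l /\ f b = r) \/ (f a = r /\ f b = l) ->
  (forall x, a < x < b -> l < f x < r) -> f @` `[a,b]%classic = `[l,r]%classic.
Proof.
move=> fc ab lr hab hi; apply/seteqP; split.
  move=> y [x] /=; rewrite !in_itv /= => /andP[ax xb] <-.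
  case: (ltgtP a x) ax => // [ax _|<- _]; last by case: hab => -[-> _]; rewrite lexx ltW.
  case: (ltgtP x b) xb => // [xb _|-> _]; last by case: hab => -[_ ->]; rewrite lexx ltW.
  by have /andP[h1 h2] := hi x (introT andP (conj ax xb)); rewrite !ltW.
move=> y /=; rewrite in_itv /= => /andP[ly yr].
have [|c cab fcy] := @IVT R f a b y (ltW ab) fc.
  by case: hab => -[-> ->]; rewrite ?(ge_min, le_max) ?ly ?yr ?orbT.
by exists c.
Qed.
End S.
Arguments gen_pull {R f p q l r}.
Arguments image_eq {R f a b l r}.
Arguments itv_sub {R a b c e}.

Theorem lemma3p11 (R : realType) (f : R -> R)
  (f_cont : {within `[0, 1]%classic, continuous f})
  (f_maps : f @` `[0, 1]%classic `<=` `[0, 1]%classic)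
  (f_nosplit : ~ admits_splitting_sequence f)
  (d e : R) (d0 : 0 <= d) (de : d < e) (e1 : e <= 1)
  (hde : (f d = d /\ f e = e) \/ (f d = e /\ f e = d)) :
  exists! C : set R,
    (exists2 x, (`[0, 1]%classic `&` f @^-1` `]d, e[%classic) x &
        C = connected_component (`[0, 1]%classic `&` f @^-1` `]d, e[%classic) x) /\
    f @` C = `]d, e[%classic.
Proof.
set U := `[0, 1]%classic `&` f @^-1` `]d, e[%classic.
have fde : (f d = d \/ f d = e) /\ (f e = d \/ f e = e) by case: hde => -[-> ->]; auto.
have I01 : forall x, d <= x <= e -> `[0,1]%classic x.
  move=> x /andP[dx xe]; rewrite /= in_itv /= (le_trans d0 dx) (le_trans xe e1) //.
have cont01 : forall a b, 0 <= a -> b <= 1 -> {within `[a,b], continuous f}.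
  by move=> a b a0 b1; apply: continuous_subspaceW f_cont; apply: itv_sub.
have ivde : forall y, d <= y <= e -> exists2 x, d <= x <= e & f x = y.
  move=> y hy; have [|c] := @IVT R f d e y (ltW de) (cont01 _ _ d0 e1).
    by case: hde => -[-> ->]; move/andP: hy => [h1 h2]; rewrite ge_min le_max h1 h2 ?orbT.
  by rewrite in_itv /= => hc fc; exists c.
have itvC : forall (a b : R), connected `[a,b]%classic.
  by move=> a b; apply/connected_intervalP/interval_is_interval.
have pullC : forall x0, U x0 -> f @` connected_component U x0 = `]d, e[%classic ->
    forall l r, d < l -> l < r -> r < e -> exists a b, [/\ a < b,
      `[a,b]%classic `<=` connected_component U x0 &
      f @` `[a,b]%classic = `[l,r]%classic].
  move=> x0 Ux0 h l r dl lr re.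
  have : `]d, e[%classic l by rewrite /= in_itv /= dl (lt_trans lr re).
  rewrite -h => -[p cp fp].
  have : `]d, e[%classic r by rewrite /= in_itv /= re (lt_trans dl lr).
  rewrite -h => -[q cq fq].
  have sub01 : forall z, connected_component U x0 z -> `[0,1]%classic z.
    by move=> z /connected_component_sub [].
  have [a [b [hab ab fab hi]]] := gen_pull f_cont (sub01 _ cp) (sub01 _ cq) lr fp fq.
  have iC : is_interval (connected_component U x0).
    by apply/connected_intervalP/component_connected.
  have abC : `[a,b]%classic `<=` connected_component U x0.
    move=> z /=; rewrite in_itv /= => /andP[az zb].
    case: hab => -[h1 h2].
      by apply: (iC p q cp cq); rewrite (le_trans h1 az) (le_trans zb h2).
    by apply: (iC q p cq cp); rewrite (le_trans h1 az) (le_trans zb h2).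
  have aC : `[a,b]%classic a by rewrite /= in_itv /= lexx ltW.
  have bC : `[a,b]%classic b by rewrite /= in_itv /= lexx ltW.
  have := sub01 _ (abC _ aC); rewrite /= in_itv /= => /andP[a0 _].
  have := sub01 _ (abC _ bC); rewrite /= in_itv /= => /andP[_ b1].
  exists a, b; split => //.
  exact: image_eq (cont01 _ _ a0 b1) ab lr fab hi.
have pullde : forall l r, d < l -> l < r -> r < e -> exists a b,
    [/\ d < a, a < b, b < e & f @` `[a,b]%classic = `[l,r]%classic].
  move=> l r dl lr re.
  have [p pde fp] := ivde l (introT andP (conj (ltW dl) (ltW (lt_trans lr re)))).
  have [q qde fq] := ivde r (introT andP (conj (ltW (lt_trans dl lr)) (ltW re))).
  have [a [b [hab ab fab hi]]] := gen_pull f_cont (I01 _ pde) (I01 _ qde) lr fp fq.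
  have [da be] : d <= a /\ b <= e.
    move/andP: pde => [h3 h4]; move/andP: qde => [h5 h6].
    by case: hab => -[h1 h2]; split; lra.
  have da' : d < a.
    rewrite lt_neqAle da andbT; apply/negP => /eqP E.
    case: fab => -[fa _]; move: fa; rewrite -E => fa;
      by case: fde => -[E2|E2] _; rewrite E2 in fa; lra.
  have be' : b < e.
    rewrite lt_neqAle be andbT; apply/negP => /eqP E.
    case: fab => -[_ fb]; move: fb; rewrite E => fb;
      by case: fde => _ [E2|E2]; rewrite E2 in fb; lra.
  exists a, b; split => //.
  exact: image_eq (cont01 _ _ (le_trans d0 da) (le_trans be e1)) ab lr fab hi.
have uniq : forall x1 x2, U x1 -> U x2 ->
    f @` connected_component U x1 = `]d, e[%classic ->
    f @` connected_component U x2 = `]d, e[%classic ->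
    connected_component U x1 = connected_component U x2.
  move=> x1 x2 U1 U2 h1 h2; apply: contrapT => neq.
  have disj : forall z, connected_component U x1 z -> connected_component U x2 z -> False.
    move=> z c1 c2; apply: neq; apply/seteqP; split => y hy.
      exact: (connected_component_trans c2 (connected_component_trans (connected_component_sym c1) hy)).
    exact: (connected_component_trans c1 (connected_component_trans (connected_component_sym c2) hy)).
  have /choice [g hg] : forall lr : R * R, exists lr' : R * R,
      d < lr.1 -> lr.1 < lr.2 -> lr.2 < e ->
      [/\ d < lr'.1, lr'.1 < lr'.2, lr'.2 < e &
       f @` `[lr'.1, lr'.2]%classic = `[lr.1, lr.2]%classic].
    move=> [l r] /=; case: (pselect (d < l /\ l < r /\ r < e)) => [[h3 [h4 h5]]|nh].
      by have [a [b hb]] := pullde l r h3 h4 h5; exists (a, b).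
    by exists (0, 0) => h3 h4 h5; exfalso; apply: nh.
  pose J n := iter n g ((2 * d + e) / 3, (d + 2 * e) / 3).
  have HJ : forall n, [/\ d < (J n).1, (J n).1 < (J n).2 & (J n).2 < e].
    elim => [|n [h3 h4 h5]]; first by rewrite /J /=; split; lra.
    by have [] := hg (J n) h3 h4 h5.
  have fJ : forall n, f @` `[(J n.+1).1, (J n.+1).2]%classic = `[(J n).1, (J n).2]%classic.
    by move=> n; have [h3 h4 h5] := HJ n; have [] := hg (J n) h3 h4 h5.
  pose T n := J n.+1.
  apply: f_nosplit; exists T; split.
    split; [|split].
    - move=> n; have [h3 h4 h5] := HJ n.+1; rewrite /T.
      split; first by apply: le_trans d0 (ltW h3).
      split; first exact: ltW.
      split; first by apply: le_trans e1; apply: ltW.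
      move=> E.
      have : `[0, 1]%classic (0 : R) by rewrite /= in_itv /= lexx ler01.
      by rewrite -E /= in_itv /= => /andP[h6 _]; lra.
    - by move=> n; rewrite /T fJ.
    - by exists 0%N => n _; have [] := HJ n.+1.
  exists setT; split; first exact: infinite_nat.
  have TU : forall n, `[(T n).1, (T n).2]%classic `<=` U.
    move=> n z hz; have [h3 h4 h5] := HJ n.+1; have [h6 h7 h8] := HJ n.
    split.
      apply: I01; move: hz; rewrite /T /= in_itv /= => /andP[? ?].
      by apply/andP; split; lra.
    have : (f @` `[(T n).1, (T n).2]%classic) (f z) by exists z.
    rewrite /T fJ /= !in_itv /= => /andP[? ?].
    by apply/andP; split; lra.
  have /choice [S hS] : forall n : nat, exists s : R * R,
    [/\ 0 <= s.1, s.1 < s.2, s.2 <= 1,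
        `[s.1, s.2]%classic `&` `[(T n).1, (T n).2]%classic `<=` [set (T n).1; (T n).2]
      & f @` `[s.1, s.2]%classic = f @` `[(T n).1, (T n).2]%classic].
    move=> n.
    have pick : exists x0, [/\ U x0, f @` connected_component U x0 = `]d, e[%classic &
        forall z, `[(T n).1, (T n).2]%classic z -> ~ connected_component U x0 z].
      case: (pselect (exists z, `[(T n).1, (T n).2]%classic z /\ connected_component U x1 z)).
        move=> [z [zT zc]]; exists x2; split => // z' z'T z'c.
        have sub : `[(T n).1, (T n).2]%classic `|` connected_component U x1 `<=`
            connected_component U x1.
          apply: connected_component_max.
          - by right; apply: connected_component_refl.
          - by move=> y [/TU|/connected_component_sub].
          - apply: connectedU; first by exists z.
            + exact: itvC.
            + exact: component_connected.
        by apply: (disj z') => //; apply: sub; left.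
      move=> nh; exists x1; split => // z zT zc; apply: nh; by exists z.
    have [x0 [Ux0 hx0 nT]] := pick.
    have [h3 h4 h5] := HJ n.
    have [a [b [ab abC fab]]] := pullC x0 Ux0 hx0 _ _ h3 h4 h5.
    have aC : `[a,b]%classic a by rewrite /= in_itv /= lexx ltW.
    have bC : `[a,b]%classic b by rewrite /= in_itv /= lexx ltW.
    have := abC _ aC => /connected_component_sub [] /=; rewrite in_itv /= => /andP[a0 _] _.
    have := abC _ bC => /connected_component_sub [] /=; rewrite in_itv /= => /andP[_ b1] _.
    exists (a, b); split => //=.
      by move=> z [za zT]; exfalso; apply: (nT z zT); apply: abC.
    by rewrite fab /T fJ.
  by exists S => n _; apply: hS.
have [p pde fp] := ivde d (introT andP (conj (lexx d) (ltW de))).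
have [q qde fq] := ivde e (introT andP (conj (ltW de) (lexx e))).
have [a [b [hab ab fab hi]]] := gen_pull f_cont (I01 _ pde) (I01 _ qde) de fp fq.
have [da be] : d <= a /\ b <= e.
  move/andP: pde => [h3 h4]; move/andP: qde => [h5 h6].
  by case: hab => -[h1 h2]; split; lra.
pose m := (a + b) / 2.
have am : a < m by rewrite /m; lra.
have mb : m < b by rewrite /m; lra.
have oabU : `]a, b[%classic `<=` U.
  move=> x /=; rewrite in_itv /= => /andP[ax xb]; split.
    by apply: I01; apply/andP; split; lra.
  by rewrite /= in_itv /=; apply: hi; rewrite ax xb.
have Um : U m by apply: oabU; rewrite /= in_itv /= am mb.
have oabC : `]a, b[%classic `<=` connected_component U m.
  apply: connected_component_max => //; first by rewrite /= in_itv /= am mb.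
  by apply/connected_intervalP/interval_is_interval.
have fC : f @` connected_component U m = `]d, e[%classic.
  apply/seteqP; split.
    by move=> y [x /connected_component_sub [_ h] <-].
  move=> y; rewrite /= in_itv /= => /andP[dy ye].
  have : `[d, e]%classic y by rewrite /= in_itv /= ltW // ltW.
  rewrite -(image_eq (cont01 _ _ (le_trans d0 da) (le_trans be e1)) ab de fab hi).
  move=> [c]; rewrite /= in_itv /= => /andP[ac cb] fcy.
  exists c => //; apply: oabC; rewrite /= in_itv /=.
  apply/andP; split.
    rewrite lt_neqAle ac andbT; apply/negP => /eqP E.
    by move: fcy; rewrite -E; case: fab => -[-> _] fcy; lra.
  rewrite lt_neqAle cb andbT; apply/negP => /eqP E.
  by move: fcy; rewrite E; case: fab => -[_ ->] fcy; lra.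
exists (connected_component U m); split; first by split => //; exists m.
by move=> C2 [[x2 Ux2 ->] fC2]; apply: uniq.
Qed.
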